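(* Let $\phi$ be a nonconstant rational inner function on $\mathbb{D}^2$ and let $\alpha\in\mathbb{T}$. Then the Clark measure $\sigma_\alpha$ of $\phi$ has no point masses, i.e. $\sigma_\alpha(\{\zeta\})=0$ for every $\zeta\in\mathbb{T}^2$.
   Context: $\mathbb{D}$ is the open unit disk and $\mathbb{T}$ the unit circle. A rational inner function (RIF) on $\mathbb{D}^2$ is a rational function $\phi$ that is holomorphic and bounded on $\mathbb{D}^2$ with $|\phi(\zeta)|=1$ for almost every $\zeta\in\mathbb{T}^2$. The Poisson kernel of $\mathbb{D}^2$ is $P_z(\zeta)=\frac{(1-|z_1|^2)(1-|z_2|^2)}{|\zeta_1-z_1|^2|\zeta_2-z_2|^2}$ for $z\in\mathbb{D}^2,\ \zeta\in\mathbb{T}^2$. For $\alpha\in\mathbb{T}$, the Clark measure $\sigma_\alpha$ of $\phi$ is the unique positive (finite) Borel measure on $\mathbb{T}^2$ such that $\frac{1-|\phi(z)|^2}{|\alpha-\phi(z)|^2}=\int_{\mathbb{T}^2}P_z(\zeta)\,d\sigma_\alpha(\zeta)$ for all $z\in\mathbb{D}^2$. *)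

(* Defs.v *)
From HB Require Import structures.
From mathcomp Require Import all_boot all_order all_algebra.
From mathcomp Require Import all_classical all_reals all_analysis.
From mathcomp Require Import complex.
Set Implicit Arguments. Unset Strict Implicit. Unset Printing Implicit Defensive.
Import Order.TTheory GRing.Theory Num.Theory.
Import numFieldNormedType.Exports.
Local Open Scope classical_set_scope.
Local Open Scope ring_scope.

Definition expiC (R : realType) (t : R) : R[i] := (cos t +i* sin t)%C.

Definition cabs (R : realType) (z : R[i]) : R := ComplexField.Normc.normc z.

Definition inD (R : realType) (z : R[i]) : Prop := cabs z < 1.

(* evaluation of a polynomial in two complex variables (as {poly {poly C}},
   the inner variable being z1 and the outer one z2) at (z1, z2) *)
Definition peval2 (R : realType) (p : {poly {poly R[i]}}) (z1 z2 : R[i]) : R[i] :=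
  (p.[z2%:P]).[z1].

(* phi (a function on D^2, curried) is a rational inner function on D^2:
   phi = p/q on D^2 with q zero-free on D^2 (so phi is rational and holomorphic
   on D^2), phi is bounded on D^2, and the rational function p/q has modulus 1
   at a.e. point (e^{it1}, e^{it2}) of T^2 (a.e. w.r.t. Lebesgue measure in the
   angles; this is a periodic condition, so a.e. on R^2 = a.e. on T^2). *)
Definition is_RIF (R : realType) (phi : R[i] -> R[i] -> R[i]) : Prop :=
  exists p q : {poly {poly R[i]}},
    (forall z1 z2, inD z1 -> inD z2 ->
       peval2 q z1 z2 != 0 /\ phi z1 z2 = peval2 p z1 z2 / peval2 q z1 z2)
    /\ (exists M : R, forall z1 z2, inD z1 -> inD z2 -> cabs (phi z1 z2) <= M)
    /\ {ae (@lebesgue_measure R \x @lebesgue_measure R)%E, forall t : R * R,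
          peval2 q (expiC t.1) (expiC t.2) != 0 /\
          cabs (peval2 p (expiC t.1) (expiC t.2) / peval2 q (expiC t.1) (expiC t.2)) = 1}.

Definition poisson2 (R : realType) (z1 z2 : R[i]) (t : R * R) : R :=
  ((1 - cabs z1 ^+ 2) * (1 - cabs z2 ^+ 2)) /
  (cabs (expiC t.1 - z1) ^+ 2 * cabs (expiC t.2 - z2) ^+ 2).

(* T^2 is parametrized by angles in [0, 2pi) x [0, 2pi): a finite positive Borel
   measure on T^2 is a finite measure on R x R carried by [0,2pi) x [0,2pi).
   sigma is a Clark measure of phi for alpha if it satisfies the defining
   Poisson-integral identity on D^2. *)
Definition is_clark_measure (R : realType) (phi : R[i] -> R[i] -> R[i])
    (alpha : R[i]) (sigma : {measure set (R * R)%type -> \bar R}) : Prop :=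
  (sigma setT < +oo)%E
  /\ sigma (~` (`[0, 2 * pi[ `*` `[0, 2 * pi[)) = 0%E
  /\ forall z1 z2, inD z1 -> inD z2 ->
       ((1 - cabs (phi z1 z2) ^+ 2) / cabs (alpha - phi z1 z2) ^+ 2)%:E
       = (\int[sigma]_(t in setT) (poisson2 z1 z2 t)%:E)%E.

(* Main.v *)
Require Import Defs.
From HB Require Import structures.
From mathcomp Require Import all_boot all_order all_algebra.
From mathcomp Require Import all_classical all_reals all_analysis.
From mathcomp Require Import complex.
From mathcomp Require Import ring lra zify.
Import Order.TTheory GRing.Theory Num.Theory.
Local Open Scope classical_set_scope.
Local Open Scope ring_scope.

Section CH.
Variable R : realType.
Local Open Scope complex_scope.
Import HBNNSimple.
Local Notation C := R[i].

Lemma cabs_sqr (z : C) : cabs z ^+ 2 = complex.Re z ^+ 2 + complex.Im z ^+ 2.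
Proof. case: z => a b; rewrite /cabs /= sqr_sqrtr //; by rewrite addr_ge0 ?sqr_ge0. Qed.

Lemma cabs_ge0 (z : C) : 0 <= cabs z.
Proof. case: z => a b; exact: sqrtr_ge0. Qed.

Lemma cabsM (x y : C) : cabs (x * y) = cabs x * cabs y.
Proof. exact: ComplexField.Normc.normcM. Qed.

Lemma cabsD (x y : C) : cabs (x + y) <= cabs x + cabs y.
Proof. exact: le_normcD. Qed.

Lemma cabsN (x : C) : cabs (- x) = cabs x.
Proof. exact: normcN. Qed.

Lemma cabs_eq0 (x : C) : (cabs x == 0) = (x == 0).
Proof. apply/eqP/eqP => [/ComplexField.Normc.eq0_normc //|->]; exact: ComplexField.Normc.normc0. Qed.

Lemma cabs_gt0 (x : C) : x != 0 -> 0 < cabs x.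
Proof. by move=> x0; rewrite lt_def cabs_eq0 x0 cabs_ge0. Qed.

Lemma cabs1 : cabs (1 : C) = 1.
Proof. exact: ComplexField.Normc.normc1. Qed.

Lemma cabsX (x : C) n : cabs (x ^+ n) = cabs x ^+ n.
Proof. elim: n => [|n IH]; first by rewrite !expr0 cabs1.
by rewrite !exprS cabsM IH. Qed.

Lemma cabs_conj (x : C) : cabs (x^*) = cabs x.
Proof. case: x => a b; by rewrite /cabs /= sqrrN. Qed.

Lemma cabs_real (r : R) : cabs (r%:C) = `|r|.
Proof. by rewrite /cabs /= expr0n /= addr0 sqrtr_sqr. Qed.

Lemma Re_le_cabs (z : C) : complex.Re z <= cabs z.
Proof.
case: z => a b /=; rewrite /cabs /=.
have [a0|a0] := leP a 0; first by apply: le_trans a0 (sqrtr_ge0 _).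
rewrite -[leLHS](ger0_norm (ltW a0)) -sqrtr_sqr; apply: ler_wsqrtr; by rewrite lerDl sqr_ge0.
Qed.

Lemma cabsB (x y : C) : cabs (x - y) = cabs (y - x).
Proof. by rewrite -cabsN opprB. Qed.

Lemma cabs_sum I (r : seq I) (F : I -> C) :
  cabs (\sum_(i <- r) F i) <= \sum_(i <- r) cabs (F i).
Proof.
elim: r => [|a r IH]; first by rewrite !big_nil /cabs /= expr0n addr0 sqrtr0.
rewrite !big_cons; apply: le_trans (cabsD _ _) _; exact: lerD.
Qed.

Definition polyB (p : {poly C}) := \sum_(i < size p) cabs p`_i.

Lemma polyB_ge0 p : 0 <= polyB p.
Proof. by apply: sumr_ge0 => i _; exact: cabs_ge0. Qed.

Lemma horner_bound (p : {poly C}) z : cabs z <= 1 -> cabs p.[z] <= polyB p.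
Proof.
move=> z1; rewrite horner_coef; apply: le_trans (cabs_sum _ _ _) _.
apply: ler_sum => i _; rewrite cabsM cabsX.
apply: ler_piMr; first exact: cabs_ge0.
by apply: exprn_ile1 => //; exact: cabs_ge0.
Qed.

Lemma horner_lip (p : {poly C}) (x : C) : exists2 B, 0 <= B &
  forall z, cabs z <= 1 -> cabs (p.[z] - p.[x]) <= B * cabs (z - x).
Proof.
have : root (p - (p.[x])%:P) x by rewrite /root !hornerE subrr.
move=> /factor_theorem [s Hs]; exists (polyB s); first exact: polyB_ge0.
move=> z z1; have -> : p.[z] - p.[x] = (p - (p.[x])%:P).[z] by rewrite !hornerE.
by rewrite Hs hornerM !hornerE cabsM ler_wpM2r ?cabs_ge0 ?horner_bound.
Qed.


Lemma expiC_exp n (t : R) : expiC t ^+ n = expiC (n%:R * t).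
Proof.
elim: n => [|n IH]; first by rewrite expr0 mul0r /expiC cos0 sin0.
rewrite exprS IH /expiC /= -natr1 mulrDl mul1r cosD sinD.
apply/eqP; rewrite eq_complex /=; apply/andP; split; apply/eqP; ring.
Qed.

Lemma Re_conj_expiC (y : R) (c : C) :
  complex.Re ((expiC y)^* * c) = cos y * complex.Re c + sin y * complex.Im c.
Proof. case: c => a b; rewrite /expiC /=; ring. Qed.

Lemma angle_contra (c : C) (n : nat) : (2 <= n)%N -> c != 0 ->
  (forall th : R, -(pi/2) < th < pi/2 -> 0 <= complex.Re ((expiC (n%:R * th))^* * c)) -> False.
Proof.
move=> n2 c0 H.
have n0 : (0 : R) < n%:R by rewrite ltr0n; move: n2; case: (n).
have n2' : (2 : R) <= n%:R by rewrite ler_nat.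
have pi0 : (0 : R) < pi := pi_gt0 R.
have key x : -(pi/2 + pi/4) <= x <= pi/2 + pi/4 -> 0 <= complex.Re ((expiC x)^* * c).
  move=> /andP[x1 x2].
  have -> : x = n%:R * (x / n%:R) by rewrite mulrC divfK // gt_eqF.
  apply: H.
  have hb : `|x / n%:R| <= (pi/2 + pi/4) / 2.
    rewrite normrM [`|n%:R^-1|]ger0_norm ?invr_ge0 ?ler0n //.
    have hx : `|x| <= pi / 2 + pi / 4 by rewrite ler_norml x1 x2.
    have inv : n%:R^-1 <= 2^-1 :> R.
      by rewrite lef_pV2 ?posrE // (lt_le_trans _ n2').
    apply: le_trans (ler_wpM2l (normr_ge0 x) inv) _.
    by apply: ler_wpM2r hx; rewrite invr_ge0.
  move: hb; rewrite ler_norml => /andP[h1 h2]; apply/andP; split; lra.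
clear H; case: c c0 key => c1 c2 c0 key.
have k0 := key 0; rewrite Re_conj_expiC cos0 sin0 /= in k0.
have k1 := key (pi/2); rewrite Re_conj_expiC cos_pihalf sin_pihalf /= in k1.
have k2 := key (-(pi/2)); rewrite Re_conj_expiC cosN sinN cos_pihalf sin_pihalf /= in k2.
have k3 := key (pi/4 + pi/2); rewrite Re_conj_expiC cosDpihalf /= in k3.
have s4 : 0 < sin (pi / 4 : R) by apply: sin_gt0_pihalf; apply/andP; split; lra.
have e2 : c2 = 0.
  have h1 : 0 <= c2 by move: k1 => /(_ _); lra.
  have h2 : 0 <= - c2 by move: k2 => /(_ _); lra.
  lra.
rewrite e2 mulr0 addr0 in k3.
have e1 : c1 = 0 by nra.
by move: c0; rewrite e1 e2 eqxx.
Qed.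

Lemma factorC (p : {poly C}) x : p != 0 ->
  exists n q, p = q * ('X - x%:P) ^+ n /\ q.[x] != 0.
Proof.
move=> p0; case: (multiplicity_XsubC p x) => n [q]; rewrite p0 /= /root => hq ->.
by exists n, q.
Qed.

Lemma small_eps (c K d : R) : 0 < c -> 0 < d ->
  (forall e, 0 < e <= d -> c <= e * K) -> False.
Proof.
move=> c0 d0 H.
have [K0|K0] := leP K 0.
  have := H d; rewrite lexx d0 => /(_ isT) h.
  have : d * K <= 0 by rewrite pmulr_rle0.
  lra.
have [hd|hd] := leP (c / (2 * K)) d.
  have e0 : 0 < c / (2 * K) by rewrite divr_gt0 // mulr_gt0.
  have := H (c / (2 * K)); rewrite e0 hd => /(_ isT).
  have -> : c / (2 * K) * K = c / 2 by field; rewrite gt_eqF.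
  lra.
have := H d; rewrite lexx d0 => /(_ isT) h.
move: hd; rewrite ltr_pdivlMr ?mulr_gt0 // => hd.
nra.
Qed.

Lemma cabs_shift (e : R) : 0 <= e -> cabs ((1 - e)%:C - 1) = e.
Proof.
move=> e0; have -> : (1 - e)%:C - 1 = (- e)%:C :> C.
  by apply/eqP; rewrite eq_complex /=; apply/andP; split; apply/eqP; ring.
by rewrite cabs_real normrN ger0_norm.
Qed.

Lemma radial (Q1 E : {poly C}) (j k : nat) (m : R) : 0 < m -> E.[1] != 0 ->
  (k <= j.+1)%N ->
  (forall r : R, 0 <= r < 1 ->
     m * cabs (E * ('X - 1) ^+ k).[r%:C] <= 2 * (1 - r) ^+ 2 * cabs (Q1 * ('X - 1) ^+ j).[r%:C]) ->
  False.
Proof.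
move=> m0 E1 kj H.
have [B2 B20 HB2] := horner_lip E 1.
pose B1 := polyB Q1.
have B10 : 0 <= B1 by exact: polyB_ge0.
apply: (@small_eps (m * cabs E.[1]) (2 * B1 + m * B2) 1); first by rewrite mulr_gt0 // cabs_gt0.
  exact: ltr01.
move=> e /andP[e0 e1].
have r01 : 0 <= 1 - e < 1 by apply/andP; split; lra.
have := H _ r01.
rewrite !hornerM !horner_exp !hornerXsubC !cabsM !cabsX (cabs_shift e (ltW e0)).
have -> : 1 - (1 - e) = e by ring.
move=> h.
have cr : cabs ((1 - e)%:C : C) <= 1 by rewrite cabs_real ger0_norm; lra.
have hQ := horner_bound Q1 _ cr.
have hE := HB2 _ cr; rewrite (cabs_shift e (ltW e0)) in hE.
have ek0 : 0 < e ^+ k by rewrite exprn_gt0.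
have hpow : e ^+ 2 * e ^+ j <= e ^+ k * e.
  rewrite -exprD -exprSr; apply: ler_wiXn2l => //; first exact: ltW.
have h2 : e ^+ k * (m * cabs E.[(1 - e)%:C]) <= e ^+ k * (2 * e * B1).
  have -> : e ^+ k * (m * cabs E.[(1 - e)%:C]) = m * (cabs E.[(1 - e)%:C] * e ^+ k) by ring.
  apply: le_trans h _.
  have q0 := cabs_ge0 Q1.[(1 - e)%:C].
  have := ler_pM (mulr_ge0 (exprn_ge0 _ (ltW e0)) (exprn_ge0 _ (ltW e0))) q0 hpow hQ.
  have -> : 2 * e ^+ 2 * (cabs Q1.[(1 - e)%:C] * e ^+ j) = 2 * (e ^+ 2 * e ^+ j * cabs Q1.[(1 - e)%:C]) by ring.
  have -> : e ^+ k * (2 * e * B1) = 2 * (e ^+ k * e * B1) by ring.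
  by move=> hh; apply: ler_wpM2l.
rewrite ler_pM2l // in h2.
have tri : cabs E.[1] <= cabs E.[(1 - e)%:C] + B2 * e.
  have -> : E.[1] = E.[(1 - e)%:C] - (E.[(1 - e)%:C] - E.[1]) by ring.
  apply: le_trans (cabsD _ _) _; rewrite cabsN; exact: lerD.
have := ler_wpM2l (ltW m0) tri.
nra.
Qed.

Lemma ReD (x y : C) : complex.Re (x + y) = complex.Re x + complex.Re y.
Proof. by case: x; case: y. Qed.

Lemma ReN (x : C) : complex.Re (- x) = - complex.Re x.
Proof. by case: x. Qed.

Lemma ReMr (s : R) (z : C) : complex.Re (s%:C * z) = s * complex.Re z.
Proof. case: z => a b /=; ring. Qed.

Lemma Re_ge_ncabs (z : C) : - cabs z <= complex.Re z.
Proof. have := Re_le_cabs (- z); rewrite ReN cabsN; lra. Qed.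

Lemma cabs_expiC (t : R) : cabs (expiC t) = 1.
Proof. by rewrite /cabs /expiC /= cos2Dsin2 sqrtr1. Qed.

Lemma conjM (x y : C) : (x * y)^*%C = x^*%C * y^*%C.
Proof. by case: x; case: y => a b c d /=; apply/eqP; rewrite eq_complex /=; apply/andP; split; apply/eqP; ring. Qed.

Lemma conjB (x y : C) : (x - y)^*%C = x^*%C - y^*%C.
Proof. by case: x; case: y => a b c d /=; apply/eqP; rewrite eq_complex /=; apply/andP; split; apply/eqP; ring. Qed.

Lemma conjX (x : C) n : (x ^+ n)^*%C = (x^*%C) ^+ n.
Proof. elim: n => [|n IH]; first by rewrite !expr0 conjc1. by rewrite !exprS conjM IH. Qed.

Lemma conjN (x : C) : (- x)^*%C = - x^*%C.
Proof. by case: x => a b /=; apply/eqP; rewrite eq_complex /=; apply/andP; split; apply/eqP; ring. Qed.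

Lemma expiC_conj (t : R) : expiC t * (expiC t)^*%C = 1.
Proof.
rewrite /expiC /=; apply/eqP; rewrite eq_complex /=; apply/andP; split; apply/eqP.
  by rewrite -(cos2Dsin2 t); ring.
ring.
Qed.

Lemma pow_ident (x : R) (a b : C) (j n : nat) : a * b = 1 ->
  (- (x%:C * a)) ^+ j * (- (x%:C * b)) ^+ (j + n) =
  ((x ^+ (2 * j + n))%:C) * ((-1) ^+ n * b ^+ n).
Proof.
move=> ab; rewrite exprD mulrA -exprMn.
have -> : - (x%:C * a) * - (x%:C * b) = (x ^+ 2)%:C.
  by rewrite mulrNN mulrACA ab mulr1 rmorphXn.
have -> : - (x%:C * b) = (-1) * x%:C * b by ring.
rewrite !exprMn -!rmorphXn -exprM; rewrite mulnC exprD rmorphM; ring.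
Qed.

Lemma cabs_line (e th : R) : 0 < e <= cos th -> cabs (1 - e%:C * expiC th) < 1.
Proof.
move=> /andP[e0 ec].
have hs := cabs_sqr (1 - e%:C * expiC th).
have c2 := cos2Dsin2 th.
have : cabs (1 - e%:C * expiC th) ^+ 2 < 1.
  rewrite hs /expiC /=.
  have -> : (1 - (e * cos th - 0 * sin th)) ^+ 2 + (0 - (e * sin th + 0 * cos th)) ^+ 2
     = 1 - 2 * e * cos th + e ^+ 2 * (cos th ^+ 2 + sin th ^+ 2) by ring.
  rewrite c2; nra.
have := cabs_ge0 (1 - e%:C * expiC th); nra.
Qed.

Lemma angle_part (Q1 E : {poly C}) (j n : nat) (al : C) :
  (2 <= n)%N -> al != 0 -> Q1.[1] != 0 -> E.[1] != 0 ->
  (forall l : C, cabs l < 1 ->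
     0 <= complex.Re (al * (Q1 * ('X - 1) ^+ j).[l] * ((E * ('X - 1) ^+ (j + n)).[l])^*%C)) ->
  False.
Proof.
move=> n2 al0 Q0 E0 H.
pose G l := al * Q1.[l] * (E.[l])^*%C.
have cnz : (-1) ^+ n * G 1 != 0.
  by rewrite /G !mulf_neq0 ?signr_eq0 // conjc_eq0.
apply: (angle_contra _ _ n2 cnz) => th hth.
pose y := (-1) ^+ n * (expiC (n%:R * th))^*%C.
have -> : (expiC (n%:R * th))^*%C * ((-1) ^+ n * G 1) = y * G 1 by rewrite /y; ring.
have co : 0 < cos th by apply: cos_gt0_pihalf.
have [BQ BQ0 HBQ] := horner_lip Q1 1.
have [BE' BE'0 HBE] := horner_lip E 1.
pose BE := polyB E.
have BE0 : 0 <= BE by exact: polyB_ge0.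
pose K := cabs al * (BQ * BE + cabs Q1.[1] * BE').
rewrite leNgt; apply/negP => neg.
apply: (@small_eps (- complex.Re (y * G 1)) K (cos th)); first by lra.
  exact: co.
move=> e /andP[e0 ec].
pose l := 1 - e%:C * expiC th.
have hl : cabs l < 1 by apply: cabs_line; rewrite e0 ec.
have hl1 : cabs l <= 1 by exact: ltW.
have hle : cabs (l - 1) = e.
  have -> : l - 1 = - (e%:C * expiC th) by rewrite /l; ring.
  by rewrite cabsN cabsM cabs_expiC mulr1 cabs_real ger0_norm // ltW.
have H1 := H l hl.
have Eq1 : al * (Q1 * ('X - 1) ^+ j).[l] * ((E * ('X - 1) ^+ (j + n)).[l])^*%C
   = ((e ^+ (2 * j + n))%:C) * (y * G l).
  rewrite !hornerM !horner_exp !hornerXsubC conjM conjX.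
  have -> : l - 1 = - (e%:C * expiC th) by rewrite /l; ring.
  rewrite conjN conjM conjc_real.
  have hh := pow_ident e _ _ j n (expiC_conj th).
  have -> : al * (Q1.[l] * (- (e%:C * expiC th)) ^+ j) * ((E.[l])^*%C * (- (e%:C * (expiC th)^*%C)) ^+ (j + n))
     = G l * ((- (e%:C * expiC th)) ^+ j * (- (e%:C * (expiC th)^*%C)) ^+ (j + n)) by rewrite /G; ring.
  rewrite hh /y -expiC_exp conjX; ring.
rewrite Eq1 ReMr in H1.
have ep : 0 < e ^+ (2 * j + n) by rewrite exprn_gt0.
have H2 : 0 <= complex.Re (y * G l).
  by rewrite -(pmulr_rge0 _ ep).
have cy : cabs y = 1.
  by rewrite /y cabsM cabsX cabsN cabs1 expr1n mul1r cabs_conj cabs_expiC.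
have dG : cabs (G l - G 1) <= e * K.
  have -> : G l - G 1 = al * ((Q1.[l] - Q1.[1]) * (E.[l])^*%C + Q1.[1] * (E.[l] - E.[1])^*%C).
    by rewrite /G conjB; ring.
  rewrite cabsM /K; have a0 := cabs_ge0 al.
  rewrite [e * _]mulrCA; apply: ler_wpM2l => //.
  apply: le_trans (cabsD _ _) _; rewrite !cabsM !cabs_conj.
  have q1 := HBQ _ hl1; have e1 := HBE _ hl1; rewrite hle in q1 e1.
  have eb := horner_bound E _ hl1.
  have g1 := cabs_ge0 (Q1.[l] - Q1.[1]).
  have g2 := cabs_ge0 (E.[l] - E.[1]).
  have g3 := cabs_ge0 Q1.[1].
  have g4 := cabs_ge0 E.[l].
  have t1 := ler_pM g1 g4 q1 eb.
  have t2 := ler_wpM2l g3 e1.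
  have -> : e * (BQ * BE + cabs Q1.[1] * BE') = BQ * e * BE + cabs Q1.[1] * (BE' * e) by ring.
  exact: lerD.
have : complex.Re (y * (G l - G 1)) <= e * K.
  apply: le_trans _ dG; have := Re_le_cabs (y * (G l - G 1)).
  by rewrite cabsM cy mul1r.
have -> : y * (G l - G 1) = y * G l - y * G 1 by ring.
rewrite ReD ReN; lra.
Qed.

Lemma core (Q D : {poly C}) (al : C) (m : R) : 0 < m -> al != 0 -> Q != 0 -> D != 0 ->
  (forall r : R, 0 <= r < 1 -> m * cabs D.[r%:C] <= 2 * (1 - r) ^+ 2 * cabs Q.[r%:C]) ->
  (forall l : C, cabs l < 1 -> 0 <= complex.Re (al * Q.[l] * (D.[l])^*%C)) -> False.
Proof.
move=> m0 al0 Q0 D0 HR HA.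
have [j [Q1 [EQ Q10]]] := factorC Q 1 Q0.
have [k [E [ED E0]]] := factorC D 1 D0.
rewrite polyC1 in EQ ED.
have [kj|jk] := leqP k j.+1.
  apply: (radial Q1 E j k m m0 E0 kj) => r hr.
  by rewrite -EQ -ED; apply: HR.
have n2 : (2 <= k - j)%N by lia.
apply: (angle_part Q1 E j (k - j) al n2 al0 Q10 E0) => l hl.
have -> : (j + (k - j))%N = k by lia.
by rewrite -EQ -ED; apply: HA.
Qed.

Lemma cabsB_sqr (u v : C) :
  cabs (u - v) ^+ 2 = cabs u ^+ 2 - 2 * complex.Re (u * v^*%C) + cabs v ^+ 2.
Proof. rewrite !cabs_sqr; case: u => a b; case: v => c d /=; ring. Qed.

Lemma cabsV (z : C) : cabs z^-1 = (cabs z)^-1.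
Proof. exact: ComplexField.Normc.normcV. Qed.

Lemma clark_alg (al Pv Qv : C) (x : R) : cabs al = 1 -> Qv != 0 -> 0 < x ->
  x <= (1 - cabs (Pv / Qv) ^+ 2) / cabs (al - Pv / Qv) ^+ 2 ->
  al * Qv - Pv != 0 /\
  x * cabs (al * Qv - Pv) ^+ 2 <= 2 * complex.Re (al * Qv * (al * Qv - Pv)^*%C).
Proof.
move=> a1 Q0 x0 H.
set Dv := al * Qv - Pv.
have eD : al - Pv / Qv = Dv / Qv by rewrite /Dv; field.
rewrite eD in H.
have D0 : Dv != 0.
  apply/negP => /eqP D0; move: H; rewrite D0 mul0r.
  have -> : cabs (0 : C) = 0 by apply/eqP; rewrite cabs_eq0.
  rewrite expr0n /= invr0 mulr0; lra.
split => //.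
have q0 := cabs_gt0 _ Q0; have d0 := cabs_gt0 _ D0.
move: H; rewrite !cabsM !cabsV.
have -> : (1 - (cabs Pv * (cabs Qv)^-1) ^+ 2) / (cabs Dv * (cabs Qv)^-1) ^+ 2
   = (cabs Qv ^+ 2 - cabs Pv ^+ 2) / cabs Dv ^+ 2.
  by field; rewrite !gt_eqF.
rewrite ler_pdivlMr ?exprn_gt0 // => H.
have eP : Pv = al * Qv - Dv by rewrite /Dv; ring.
have := cabsB_sqr (al * Qv) Dv; rewrite -eP cabsM a1 mul1r => hh.
have := sqr_ge0 (cabs Dv); lra.
Qed.

Definition diagpoly (p : {poly {poly C}}) (a b : C) : {poly C} :=
  \sum_(i < size p) (p`_i \Po (a *: 'X)) * (b *: 'X) ^+ i.

Lemma diagpolyE p a b l : (diagpoly p a b).[l] = peval2 p (a * l) (b * l).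
Proof.
rewrite /diagpoly /peval2 horner_sum [p.[_]]horner_coef horner_sum.
apply: eq_bigr => i _.
by rewrite !hornerM horner_comp !horner_exp hornerZ hornerX hornerC hornerZ hornerX.
Qed.

Lemma meas_set1 (t : R * R) : measurable [set t].
Proof.
have -> : [set t] = [set t.1] `*` [set t.2].
  apply/seteqP; split => [x -> //|[x1 x2] /= [-> ->]]; by case: t.
by apply: measurableX; apply: measurable_set1.
Qed.

Lemma point_mass_lb (sigma : {measure set (R * R)%type -> \bar R})
  (f : R * R -> R) (t : R * R) : (forall x, 0 <= f x) ->
  ((f t)%:E * sigma [set t] <= \int[sigma]_(x in setT) (f x)%:E)%E.
Proof.
move=> f0.
have mt := meas_set1 t.
pose h := scale_nnsfun (indic_nnsfun R mt) (f0 t).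
have hE : sintegral sigma h = ((f t)%:E * sigma [set t])%E.
  have := sintegralrM sigma (f t) (indic_nnsfun R mt).
  move=> /= E; rewrite [LHS]E; congr (_ * _)%E.
  exact: sintegral_indic.
rewrite -hE ge0_integralTE; last by move=> x; rewrite lee_fin.
apply: ereal_sup_ubound; exists h => //= x.
rewrite lee_fin /=.
rewrite measurable_realfun.mindicE; case: (boolP (x \in _)).
  by rewrite inE => ->; rewrite mulr1.
by rewrite mulr0.
Qed.

Lemma poisson2_ge0 (z1 z2 : C) (x : R * R) : inD z1 -> inD z2 -> 0 <= poisson2 z1 z2 x.
Proof.
rewrite /inD /poisson2 => h1 h2.
have c1 := cabs_ge0 z1; have c2 := cabs_ge0 z2.
apply: divr_ge0; last by apply: mulr_ge0; apply: sqr_ge0.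
apply: mulr_ge0; nra.
Qed.

Lemma poisson_diag (t : R * R) l :
  poisson2 (expiC t.1 * l) (expiC t.2 * l) t =
  ((1 - cabs l ^+ 2) * (1 - cabs l ^+ 2)) / (cabs (1 - l) ^+ 2 * cabs (1 - l) ^+ 2).
Proof.
rewrite /poisson2 !cabsM !cabs_expiC !mul1r.
have e1 u : expiC u - expiC u * l = expiC u * (1 - l) by ring.
by rewrite !e1 !cabsM !cabs_expiC !mul1r.
Qed.
End CH.

Theorem theorem2p1 (R : realType) (phi : R[i] -> R[i] -> R[i]) (alpha : R[i]) :
  is_RIF phi ->
  ~ (exists c : R[i], forall z1 z2, inD z1 -> inD z2 -> phi z1 z2 = c) ->
  cabs alpha = 1 ->
  forall sigma : {measure set (R * R)%type -> \bar R},
    is_clark_measure phi alpha sigma ->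
    forall t : R * R, sigma [set t] = 0%E.
Proof.
move=> [p [q [Hpq _]]] _ a1 sigma [fin [_ Hcl]] t.
have mt := meas_set1 _ t.
have s0 : (0 <= sigma [set t])%E by exact: measure_ge0.
have sfin : (sigma [set t] < +oo)%E.
  apply: le_lt_trans fin.
  by apply: le_measure; rewrite ?inE //; exact: measurableT.
move: s0 sfin; case Es: (sigma [set t]) => [mr| |] //= mr0 _.
rewrite lee_fin le_eqVlt in mr0; case/orP: mr0 => [/eqP <- //|mpos].
exfalso.
pose a := expiC t.1; pose b := expiC t.2.
pose P := diagpoly _ p a b; pose Q := diagpoly _ q a b.
pose D := alpha%:P * Q - P.
have cabs00 : cabs (0 : R[i]) = 0 by apply/eqP; rewrite cabs_eq0.
have al0 : alpha != 0.
  apply/negP => /eqP a0; move: a1; rewrite a0 cabs00 => /eqP; by rewrite eq_sym oner_eq0.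
have ca : cabs a = 1 by exact: cabs_expiC.
have cb : cabs b = 1 by exact: cabs_expiC.
have key l : cabs l < 1 -> Q.[l] != 0 /\ D.[l] != 0 /\
   mr * (((1 - cabs l ^+ 2) * (1 - cabs l ^+ 2)) / (cabs (1 - l) ^+ 2 * cabs (1 - l) ^+ 2))
     * cabs D.[l] ^+ 2 <= 2 * complex.Re (alpha * Q.[l] * (D.[l])^*%C).
  move=> hl.
  have i1 : inD (a * l) by rewrite /inD cabsM ca mul1r.
  have i2 : inD (b * l) by rewrite /inD cabsM cb mul1r.
  have [qnz phiE] := Hpq _ _ i1 i2.
  have QE : Q.[l] = peval2 q (a * l) (b * l) by exact: diagpolyE.
  have PE : P.[l] = peval2 p (a * l) (b * l) by exact: diagpolyE.
  have cl := cabs_ge0 _ l.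
  have c1l : 0 < cabs (1 - l).
    apply: cabs_gt0; rewrite subr_eq0; apply/negP => /eqP l1.
    by move: hl; rewrite -l1 cabs1 ltxx.
  have xpos : 0 < mr * (((1 - cabs l ^+ 2) * (1 - cabs l ^+ 2)) / (cabs (1 - l) ^+ 2 * cabs (1 - l) ^+ 2)).
    apply: mulr_gt0 => //; apply: divr_gt0; apply: mulr_gt0; rewrite ?exprn_gt0 //; nra.
  have hle := Hcl _ _ i1 i2.
  have lb := point_mass_lb _ sigma (poisson2 (a * l) (b * l)) t (fun x => poisson2_ge0 _ _ _ x i1 i2).
  rewrite -hle Es -EFinM lee_fin poisson_diag in lb.
  rewrite phiE -PE -QE in lb.
  have qnz' : Q.[l] != 0 by rewrite QE.
  have lb' : mr * (((1 - cabs l ^+ 2) * (1 - cabs l ^+ 2)) / (cabs (1 - l) ^+ 2 * cabs (1 - l) ^+ 2)) <=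
     (1 - cabs (P.[l] / Q.[l]) ^+ 2) / cabs (alpha - P.[l] / Q.[l]) ^+ 2 by rewrite mulrC.
  have [dnz ineq] := clark_alg _ alpha P.[l] Q.[l] _ a1 qnz' xpos lb'.
  have DE : D.[l] = alpha * Q.[l] - P.[l] by rewrite /D !hornerE.
  by rewrite DE; split => //; split.
have c00 : cabs (0 : R[i]) < 1 by rewrite cabs00 ltr01.
have [Q0 [D0 _]] := key 0 c00.
apply: (core _ Q D alpha mr mpos al0 _ _).
- by apply/negP => /eqP Qz; move: Q0; rewrite Qz horner0 eqxx.
- by apply/negP => /eqP Dz; move: D0; rewrite Dz horner0 eqxx.
- move=> r /andP[r0 r1].
  have hl : cabs ((r%:C)%C : R[i]) < 1 by rewrite cabs_real ger0_norm.
  have [_ [dnz ineq]] := key _ hl.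
  have ReW := Re_le_cabs _ (alpha * Q.[(r%:C)%C] * (D.[(r%:C)%C])^*%C).
  rewrite !cabsM a1 mul1r cabs_conj in ReW.
  rewrite cabs_real ger0_norm // in ineq.
  have e1r : (1 - (r%:C)%C : R[i]) = ((1 - r)%:C)%C by rewrite rmorphB rmorph1.
  move: ineq; rewrite e1r cabs_real ger0_norm; last by lra.
  have d0 := cabs_gt0 _ _ dnz.
  have q0 := cabs_ge0 _ Q.[(r%:C)%C].
  have -> : ((1 - r ^+ 2) * (1 - r ^+ 2)) / ((1 - r) ^+ 2 * (1 - r) ^+ 2)
      = (1 + r) ^+ 2 / (1 - r) ^+ 2.
    by field; rewrite subr_eq0; apply/negP => /eqP h; move: r1; rewrite -h ltxx.
  move=> ineq.
  have ineq' := le_trans ineq (ler_wpM2l (ler0n _ 2) ReW).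
  have hA : mr * ((1 + r) ^+ 2 / (1 - r) ^+ 2) * (1 - r) ^+ 2 = mr * (1 + r) ^+ 2.
    by field; rewrite subr_eq0; apply/negP => /eqP h; move: r1; rewrite -h ltxx.
  have hfin : mr * cabs D.[(r%:C)%C] <= 2 * (1 - r) ^+ 2 * cabs Q.[(r%:C)%C].
    move: ineq' d0 q0 hA; generalize (cabs D.[(r%:C)%C]) (cabs Q.[(r%:C)%C]) (mr * ((1 + r) ^+ 2 / (1 - r) ^+ 2)).
    move=> d qq A ineq' d0 q0 hA.
    have h1 : A * d <= 2 * qq.
      rewrite -(ler_pM2r d0); move: ineq'; rewrite expr2; lra.
    have s0' : 0 <= (1 - r) ^+ 2 by exact: sqr_ge0.
    have h2 := ler_wpM2l s0' h1.
    have h3 : mr <= mr * (1 + r) ^+ 2.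
      have := mulr_ge0 (ltW mpos) (mulr_ge0 r0 r0).
      have := mulr_ge0 (ltW mpos) r0.
      rewrite expr2; nra.
    have := ler_wpM2r (ltW d0) h3.
    nra.
  exact: hfin.
- move=> l hl; have [_ [_ ineq]] := key _ hl.
  have : 0 <= mr * (((1 - cabs l ^+ 2) * (1 - cabs l ^+ 2)) / (cabs (1 - l) ^+ 2 * cabs (1 - l) ^+ 2)) * cabs D.[l] ^+ 2.
    apply: mulr_ge0; last exact: sqr_ge0.
    apply: mulr_ge0; first exact: ltW.
    apply: divr_ge0; last by apply: mulr_ge0; apply: sqr_ge0.
    by rewrite -expr2 sqr_ge0.
  lra.
Qed.
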